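(* Let $Q$ be a finite quiver, $A=\Bbbk Q/(\geq 2)$, $J$ the ideal of $A$ generated by the loops, $B=A/J$. For each vertex $i$ let $\tilde P_i=Be_i$, let $\tilde I_i$ be the indecomposable injective $B$-module at $i$, and let $S_i$ be the simple module at $i$; regard these as $A$-modules. Then: (1) If $i\neq j$ and $\{\tilde P_i,\tilde P_j\}$ is a brick set in $A$-mod, then $\mathrm{Ext}^1_A(\tilde P_i,\tilde P_j)=0$; and if $\tilde P_i\not\cong S_i$ then $\mathrm{Ext}^1_A(\tilde P_i,\tilde P_i)=0$. (2) If $i\neq j$ and $\{\tilde I_i,\tilde I_j\}$ is a brick set in $A$-mod, then $\mathrm{Ext}^1_A(\tilde I_i,\tilde I_j)=0$; and if $\tilde I_i\not\cong S_i$ then $\mathrm{Ext}^1_A(\tilde I_i,\tilde I_i)=0$. (3) If $i\neq j$ then $\mathrm{Ext}^1_A(\tilde P_i,S_j)=0$. (4) If $i\neq j$ then $\mathrm{Ext}^1_A(S_i,\tilde I_j)=0$.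
   Context: $\Bbbk$ is an algebraically closed field; $\Bbbk Q$ is the path algebra with $e_i\alpha=\delta_{i,t(\alpha)}\alpha$, $\alpha e_j=\delta_{j,s(\alpha)}\alpha$; $(\geq 2)$ is the ideal generated by paths of length $\geq 2$; modules are finite-dimensional left modules, and a $B$-module is regarded as an $A$-module via $A\to B=A/J$. The indecomposable injective $B$-module at $i$ is $\tilde I_i=\mathrm{Hom}_\Bbbk(e_iB,\Bbbk)$. A brick is a module $M$ with $\mathrm{End}(M)=\Bbbk$; a set $\{X_1,\dots,X_k\}$ of nonzero modules is a brick set if each is a brick and $\dim\mathrm{Hom}(X_a,X_b)=\delta_{ab}$. *)

(* Defs.v *)
From HB Require Import structures.
From mathcomp Require Import all_boot all_order all_algebra.
Unset Printing Implicit Defensive.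
Import GRing.Theory.
Local Open Scope ring_scope.

Section Quiver.
Variables (F : closedFieldType) (V Arr : finType) (s t : Arr -> V).

(* The standard basis of A = kQ/(>=2): trivial paths e_i (inl i) and
   arrows (inr a). *)
Definition pbasis := (V + Arr)%type.

(* Product of two basis elements of A (None = 0), with the convention
   e_i a = delta_{i,t a} a, a e_j = delta_{j,s a} a, paths of length 2 = 0. *)
Definition mulA (x y : pbasis) : option pbasis :=
  match x, y with
  | inl i, inl j => if i == j then Some (inl i) else None
  | inl i, inr a => if t a == i then Some (inr a) else None
  | inr a, inl j => if s a == j then Some (inr a) else None
  | inr _, inr _ => None
  end.

Definition is_loop (x : pbasis) : bool :=
  if x is inr a then s a == t a else false.

(* Product in B = A/J (J generated by the loops): the non-loop basis
   elements form a basis of B, and loops map to 0. *)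
Definition mulB (x y : pbasis) : option pbasis :=
  if is_loop x || is_loop y then None else mulA x y.

(* A finite-dimensional left A-module: F^n (column vectors) with the
   matrices by which the basis elements of A act. *)
Record amod := AMod { mdim : nat; mact : pbasis -> 'M[F]_mdim }.

Definition optmx n (o : option pbasis) (M : pbasis -> 'M[F]_n) : 'M[F]_n :=
  if o is Some z then M z else 0.

Definition is_amod (M : amod) : Prop :=
  (forall x y, mact M x *m mact M y = optmx (mdim M) (mulA x y) (mact M)) /\
  \sum_(i : V) mact M (inl i) = 1%:M.

Definition is_hom (M N : amod) : 'M[F]_(mdim N, mdim M) -> Prop :=
  fun f => forall x, f *m mact M x = mact N x *m f.

Definition hom_zero (M N : amod) : Prop :=
  forall f, is_hom M N f -> f = 0.

Definition brick (M : amod) : Prop :=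
  (0 < mdim M)%N /\ forall f, is_hom M M f -> exists c : F, f = c%:M.

Definition brick_set (I : finType) (X : I -> amod) : Prop :=
  (forall a, brick (X a)) /\ (forall a b, a != b -> hom_zero (X a) (X b)).

Definition iso (M N : amod) : Prop :=
  exists (f : 'M[F]_(mdim N, mdim M)) (g : 'M[F]_(mdim M, mdim N)),
    [/\ is_hom M N f, is_hom N M g, f *m g = 1%:M & g *m f = 1%:M].

(* Ext^1_A(M, N) = 0, in Yoneda form: every short exact sequence
   0 -> N -i-> E -p-> M -> 0 of A-modules splits. *)
Definition Ext1_zero (M N : amod) : Prop :=
  forall E : amod, is_amod E ->
  forall (i : 'M[F]_(mdim E, mdim N)) (p : 'M[F]_(mdim M, mdim E)),
    is_hom N E i -> is_hom E M p ->
    (forall w : 'cV[F]_(mdim N), i *m w = 0 -> w = 0) ->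
    (forall u : 'cV[F]_(mdim M), exists v, p *m v = u) ->
    p *m i = 0 ->
    (forall v : 'cV[F]_(mdim E), p *m v = 0 -> exists w, v = i *m w) ->
    exists r : 'M[F]_(mdim E, mdim M), is_hom M E r /\ p *m r = 1%:M.

Definition fmx (T : finType) (f : T -> T -> F) : 'M[F]_#|{: T}| :=
  \matrix_(r, c) f (enum_val r) (enum_val c).

(* basis of P~_i = B e_i : non-loop basis elements b with b e_i = b *)
Definition PT (i : V) := {x : pbasis | ~~ is_loop x && (mulB x (inl i) == Some x)}.
(* basis of e_i B : non-loop basis elements b with e_i b = b *)
Definition IT (i : V) := {x : pbasis | ~~ is_loop x && (mulB (inl i) x == Some x)}.

(* P~_i = B e_i: x . c = x c in B *)
Definition Ptil (i : V) : amod :=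
  @AMod #|{: PT i}| (fun x =>
    fmx (PT i) (fun r c : PT i => ((mulB x (val c) == Some (val r)) : nat)%:R)).

(* I~_i = Hom_k(e_i B, k), dual basis c^*: (x . c^* )(r) = c^*(r x) *)
Definition Itil (i : V) : amod :=
  @AMod #|{: IT i}| (fun x =>
    fmx (IT i) (fun r c : IT i => ((mulB (val r) x == Some (val c)) : nat)%:R)).

Definition Simple (i : V) : amod :=
  @AMod 1 (fun x => ((x == inl i) : nat)%:R%:M).

End Quiver.

Arguments mdim {F V Arr}.
Arguments mact {F V Arr}.
Arguments is_amod {F V Arr} s t M.
Arguments is_hom {F V Arr} M N.
Arguments hom_zero {F V Arr} M N.
Arguments brick {F V Arr} M.
Arguments brick_set {F V Arr I} X.
Arguments iso {F V Arr} M N.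
Arguments Ext1_zero {F V Arr} s t M N.
Arguments Ptil F {V Arr} s t i.
Arguments Itil F {V Arr} s t i.
Arguments Simple F {V Arr} i.

(* Main.v *)
Require Import Defs.
From HB Require Import structures.
From mathcomp Require Import all_boot all_order all_algebra.
From Stdlib Require Import ClassicalEpsilon.
Set Implicit Arguments. Unset Strict Implicit. Unset Printing Implicit Defensive.
Import GRing.Theory.
Local Open Scope ring_scope.

Section Gen.
Variable F : closedFieldType.

Definition bv (T : finType) (c : T) : 'cV[F]_#|{: T}| := delta_mx (enum_rank c) 0.
Definition br (T : finType) (c : T) : 'rV[F]_#|{: T}| := delta_mx 0 (enum_rank c).

Lemma fmx_mulbv (T : finType) (f : T -> T -> F) (c : T) :
  @fmx F T f *m bv c = \sum_(r : T) f r c *: bv r.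
Proof.
apply/matrixP => k l; rewrite /bv -colE !mxE summxE (bigD1 (enum_val k)) //=.
rewrite big1 ?addr0; last first.
  move=> r Hr; rewrite !mxE.
  case: (eqVneq k (enum_rank r)) => [Ek|]; last by rewrite /= mulr0.
  by move: Hr; rewrite Ek enum_rankK eqxx.
by rewrite !mxE enum_valK eqxx ord1 eqxx mulr1 enum_rankK.
Qed.

Lemma fmx_brmul (T : finType) (f : T -> T -> F) (c : T) :
  br c *m @fmx F T f = \sum_(r : T) f c r *: br r.
Proof.
apply/matrixP => k l; rewrite /br -rowE !mxE summxE (bigD1 (enum_val l)) //=.
rewrite big1 ?addr0; last first.
  move=> r Hr; rewrite !mxE.
  case: (eqVneq l (enum_rank r)) => [Ek|]; last by rewrite andbF /= mulr0.
  by move: Hr; rewrite Ek enum_rankK eqxx.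
by rewrite !mxE enum_valK eqxx ord1 eqxx mulr1 enum_rankK.
Qed.

Lemma sum_ind_some (X : finType) (P : pred X) m n
   (g : {x | P x} -> 'M[F]_(m, n)) (z : X) (Hz : P z) :
  \sum_(r : {x | P x}) ((Some z == Some (val r)) : nat)%:R *: g r = g (exist _ z Hz).
Proof.
rewrite (bigD1 (exist _ z Hz)) //= eqxx scale1r big1 ?addr0 // => r Hr.
case: (eqVneq (Some z) (Some (val r))) => [E|]; last by rewrite scale0r.
case: E => E.
have Er : r = exist _ z Hz by apply: val_inj; rewrite /= E.
by rewrite Er eqxx in Hr.
Qed.

Lemma sum_ind_none (X : finType) (P : pred X) m n
   (g : {x | P x} -> 'M[F]_(m, n)) (o : option X) :
  (forall r : {x | P x}, o != Some (val r)) ->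
  \sum_(r : {x | P x}) ((o == Some (val r)) : nat)%:R *: g r = 0.
Proof. by move=> H; rewrite big1 // => r _; rewrite (negbTE (H r)) scale0r. Qed.

Lemma right_inv m n (p : 'M[F]_(m, n)) :
  (forall u : 'cV[F]_m, exists v, p *m v = u) -> exists S, p *m S = 1%:M.
Proof.
move=> H.
have H' : forall (b : 'I_m), exists v : 'cV[F]_n, p *m v == delta_mx b 0.
  by move=> b; case: (H (delta_mx b 0)) => v Hv; exists v; apply/eqP.
exists (\matrix_(a, b) (xchoose (H' b)) a 0).
apply/matrixP => a b; rewrite !mxE.
have := xchooseP (H' b); move/eqP/matrixP/(_ a 0); rewrite !mxE eqxx andbT => <-.
by apply: eq_bigr => k _; rewrite !mxE.
Qed.

Lemma ker_fact m n k l (p : 'M[F]_(m, n)) (ii : 'M[F]_(n, k)) (X : 'M[F]_(n, l)) :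
  (forall v : 'cV[F]_n, p *m v = 0 -> exists w : 'cV[F]_k, v = ii *m w) -> p *m X = 0 ->
  exists W, X = ii *m W.
Proof.
move=> H HX.
have H' : forall (b : 'I_l), exists w : 'cV[F]_k, col b X == ii *m w.
  move=> b; case: (H (col b X)) => [|w Hw]; last by exists w; apply/eqP.
  by rewrite colE mulmxA HX mul0mx.
exists (\matrix_(a, b) (xchoose (H' b)) a 0).
apply/matrixP => a b; rewrite [RHS]mxE.
have := xchooseP (H' b); move/eqP/matrixP/(_ a 0).
rewrite !mxE => ->.
by apply: eq_bigr => j _; rewrite !mxE.
Qed.


Lemma eq_by_bv (T : finType) m (A B : 'M[F]_(m, #|{: T}|)) :
  (forall c : T, A *m bv c = B *m bv c) -> A = B.
Proof.
move=> H; apply/matrixP => k l; have := H (enum_val l); move/matrixP/(_ k 0).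
by rewrite /bv -!colE !mxE enum_valK.
Qed.

Lemma eq_by_br (T : finType) m (A B : 'M[F]_(#|{: T}|, m)) :
  (forall c : T, br c *m A = br c *m B) -> A = B.
Proof.
move=> H; apply/matrixP => k l; have := H (enum_val k); move/matrixP/(_ 0 l).
by rewrite /br -!rowE !mxE enum_valK.
Qed.

Lemma br_bv (T : finType) (r c : T) : br r *m bv c = ((r == c) : nat)%:R%:M :> 'M[F]_1.
Proof.
rewrite /br /bv; apply/matrixP => a b; rewrite !mxE (bigD1 (enum_rank r)) //= big1.
  rewrite !mxE !eqxx /= (inj_eq enum_rank_inj) !ord1 eqxx addr0 mulr1n.
  by case: (r == c); rewrite /= ?mul1r ?mul0r.
by move=> k Hk; rewrite !mxE (negbTE Hk) andbF mul0r.
Qed.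

Lemma sum_bool_one (T : finType) m n (g : T -> 'M[F]_(m, n)) (b : T -> bool) (k : T) :
  (forall r, b r = (r == k)) -> \sum_(r : T) (b r : nat)%:R *: g r = g k.
Proof.
move=> H; rewrite (bigD1 k) //= H eqxx scale1r big1 ?addr0 // => r Hr.
by rewrite H (negbTE Hr) scale0r.
Qed.

Lemma sum_bool_zero (T : finType) m n (g : T -> 'M[F]_(m, n)) (b : T -> bool) :
  (forall r, b r = false) -> \sum_(r : T) (b r : nat)%:R *: g r = 0.
Proof. by move=> H; rewrite big1 // => r _; rewrite H scale0r. Qed.

Lemma mx0_by_v m n (A : 'M[F]_(m, n)) : (forall v : 'cV[F]_n, A *m v = 0) -> A = 0.
Proof.
move=> H; apply/matrixP => k l; have := H (delta_mx l 0); rewrite -colE.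
by move/matrixP/(_ k 0); rewrite !mxE.
Qed.

Lemma bv_neq0 (T : finType) (c : T) : bv c != 0 :> 'cV[F]_#|{: T}|.
Proof.
apply/negP => /eqP/matrixP/(_ (enum_rank c) 0); rewrite !mxE !eqxx /=.
by move/eqP; rewrite oner_eq0.
Qed.

Lemma bv_mul_eq0 (T : finType) (c : T) (k : 'M[F]_1) : bv c *m k = 0 -> k = 0.
Proof.
move/matrixP/(_ (enum_rank c) 0); rewrite !mxE (bigD1 0) //= big1.
  by rewrite !mxE !eqxx /= mul1r addr0 => H; apply/matrixP => a b; rewrite !ord1 H mxE.
by move=> j; rewrite ord1.
Qed.

End Gen.

Section Q.
Variables (F : closedFieldType) (V Arr : finType) (s t : Arr -> V).
Local Notation amod := (amod F V Arr).


Local Notation mulB := (@Defs.mulB V Arr s t).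
Local Notation mulA := (@Defs.mulA V Arr s t).
Local Notation is_loop := (@Defs.is_loop V Arr s t).
Local Notation pb := (pbasis V Arr).
Definition PTp i (z : pb) := ~~ is_loop z && (mulB z (inl i) == Some z).
Definition ITp j (z : pb) := ~~ is_loop z && (mulB (inl j) z == Some z).

Ltac brute := repeat first
  [ progress intros
  | progress subst
  | match goal with
    | H : is_true (?x1 == ?x2) |- _ => move/eqP: H => ?
    | H : is_true (~~ (?x1 == ?x2)) |- _ => move/eqP: H => ?
    | H : Some _ = Some _ |- _ => case: H => ?
    | H : Some _ = None |- _ => discriminate H
    | H : None = Some _ |- _ => discriminate H
    | H : inl _ = inr _ |- _ => discriminate H
    | H : inr _ = inl _ |- _ => discriminate H
    | H : inl _ = inl _ |- _ => case: H => ?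
    | H : inr _ = inr _ |- _ => case: H => ?
    | H : context [?x1 == ?x2] |- _ => case: (@eqP _ x1 x2) H => ? ?
    | |- context [?x1 == ?x2] => case: (@eqP _ x1 x2) => ?
    | H : ?x1 <> ?x1 |- _ => by case: H
    | |- is_true true => exact isT
    | |- ?x1 = ?x1 => reflexivity
    | H : ?x1 <> ?x2, H' : ?x1 = ?x2 |- _ => by case: H
    | H : ?x1 <> ?x2, H' : ?x2 = ?x1 |- _ => by case: H
    | H : is_true false |- _ => discriminate H
    | H : is_true (_ && _) |- _ => case/andP: H => ? ?
    end
  | progress (simpl in * |- * ) ].

Ltac unf := rewrite /PTp /ITp /Defs.mulB /Defs.mulA /Defs.is_loop.

Lemma PT_case i (c : pb) x : PTp i c ->
  (exists z, [/\ mulB x c = Some z, mulA x c = Some z & PTp i z]) \/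
  (mulB x c = None /\ (mulA x c = None \/ exists l, [/\ x = inr l, mulA x c = Some (inr l), s l = i & t l = i])).
Proof.
unf; case: c => [j|a]; case: x => [k|l] => /= H; brute.
all: try first [ by left; eexists; split; [reflexivity|reflexivity|brute] | by right; split; [reflexivity| first [by left | by right; eexists; split]]].
Qed.

Lemma IT_case j (c : pb) x : ITp j c ->
  (exists z, [/\ mulB c x = Some z, mulA c x = Some z & ITp j z]) \/
  (mulB c x = None /\ (mulA c x = None \/ exists l, [/\ x = inr l, mulA c x = Some (inr l), s l = j & t l = j])).
Proof.
unf; case: c => [i|a]; case: x => [k|l] => /= H; brute.
all: try first [ by left; eexists; split; [reflexivity|reflexivity|brute] | by right; split; [reflexivity| first [by left | by right; eexists; split]]].
Qed.

Lemma PTe i : PTp i (inl i). Proof. by unf; rewrite /= eqxx. Qed.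
Lemma ITe j : ITp j (inl j). Proof. by unf; rewrite /= eqxx. Qed.

Lemma PT_ne_e i c : PTp i c -> c != inl i -> mulB (inl i) c = None.
Proof. by unf; case: c => [k|a] /=; brute. Qed.

Lemma IT_ne_e j r c : ITp j r -> ITp j c -> r != inl j -> mulB r c = None.
Proof. by unf; case: c => [k|a]; case: r => [k'|b] /=; brute. Qed.

Lemma loop_mulB x c : is_loop x -> mulB x c = None.
Proof. by rewrite /Defs.mulB => ->. Qed.
Lemma loop_mulB' x c : is_loop x -> mulB c x = None.
Proof. by rewrite /Defs.mulB orbC => ->. Qed.

Lemma P_homz_case i j c z : i != j -> PTp j c -> mulB (inl i) c = Some z ->
  exists a, [/\ c = inr a, z = inr a, s a = j, t a = i & s a != t a].
Proof.
move=> /eqP ij; unf; case: c => [k|a] /=; brute; eexists; split; try reflexivity; brute.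
Qed.

Lemma I_homz_case i j r z : i != j -> ITp i r -> mulB r (inl j) = Some z ->
  exists a, [/\ r = inr a, z = inr a, s a = j, t a = i & s a != t a].
Proof.
move=> /eqP ij; unf; case: r => [k|a] /=; brute; eexists; split; try reflexivity; brute.
Qed.

Lemma P_row_e i x r : PTp i r -> (mulB x r == Some (inl i)) = (x == inl i) && (r == inl i).
Proof. by unf; case: x => [k|b]; case: r => [k'|a] /=; brute. Qed.

Lemma I_col_e j x r : ITp j r -> (mulB r x == Some (inl j)) = (x == inl j) && (r == inl j).
Proof. by unf; case: x => [k|b]; case: r => [k'|a] /=; brute. Qed.

Lemma P_arr i x a : t a = i -> s a != t a ->
  mulB x (inr a) = if x == inl i then Some (inr a) else None.
Proof. by unf; case: x => [k|b] /=; brute. Qed.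

Lemma I_arr j x a : s a = j -> s a != t a ->
  mulB (inr a) x = if x == inl j then Some (inr a) else None.
Proof. by unf; case: x => [k|b] /=; brute. Qed.

Lemma P_noarr i c : (forall a, s a <> t a -> s a <> i) -> PTp i c -> c = inl i.
Proof. by move=> H; unf; case: c => [k|a] /=; brute; case: (H a). Qed.

Lemma I_noarr j c : (forall a, s a <> t a -> t a <> j) -> ITp j c -> c = inl j.
Proof. by move=> H; unf; case: c => [k|a] /=; brute; case: (H a). Qed.

Lemma mulB_e_e x i : (mulB x (inl i) == Some (inl i)) = (x == inl i).
Proof. by unf; case: x => [k|b] /=; brute. Qed.

Lemma mulB_e_e' x i : (mulB (inl i) x == Some (inl i)) = (x == inl i).
Proof. by unf; case: x => [k|b] /=; brute. Qed.

Lemma P_arr_mem i a : s a = i -> s a != t a -> PTp i (inr a).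
Proof. by unf; brute. Qed.

Lemma I_arr_mem j a : t a = j -> s a != t a -> ITp j (inr a).
Proof. by unf; brute. Qed.

Lemma P_arr_act i a : s a = i -> s a != t a -> mulB (inr a) (inl i) = Some (inr a).
Proof. by unf; brute. Qed.

Lemma I_arr_col j a r : t a = j -> s a != t a -> ITp j r ->
  (mulB r (inr a) == Some (inr a)) = (r == inl j).
Proof. by move=> ta; unf; case: r => [k|b] /=; brute. Qed.

Lemma mulA_e_l k l : t l = k -> mulA (inl k) (inr l) = Some (inr l).
Proof. by rewrite /Defs.mulA => ->; rewrite eqxx. Qed.
Lemma mulA_l_e k l : s l = k -> mulA (inr l) (inl k) = Some (inr l).
Proof. by rewrite /Defs.mulA => ->; rewrite eqxx. Qed.
Lemma mulA_arr a b : mulA (inr a) (inr b) = None.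
Proof. by []. Qed.

Lemma sec_of_retr (M N E : amod) (i : 'M[F]_(mdim E, mdim N))
  (p : 'M[F]_(mdim M, mdim E)) (q : 'M[F]_(mdim N, mdim E)) :
  is_hom N E i -> is_hom E M p -> is_hom E N q -> q *m i = 1%:M ->
  (forall u : 'cV[F]_(mdim M), exists v, p *m v = u) ->
  p *m i = 0 ->
  (forall v : 'cV[F]_(mdim E), p *m v = 0 -> exists w, v = i *m w) ->
  exists r : 'M[F]_(mdim E, mdim M), is_hom M E r /\ p *m r = 1%:M.
Proof.
move=> hi hp hq qi surj pi ex.
have [S pS] := right_inv surj.
exists ((1%:M - i *m q) *m S); split; last first.
  by rewrite mulmxA mulmxBr mulmx1 mulmxA pi mul0mx subr0.
move=> x.
set D := S *m mact M x - mact E x *m S.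
have pD : p *m D = 0.
  by rewrite /D mulmxBr !mulmxA pS mul1mx hp -mulmxA pS mulmx1 subrr.
have [W DW] := ker_fact ex pD.
have K : (1%:M - i *m q) *m i = 0 by rewrite mulmxBl mul1mx -mulmxA qi mulmx1 subrr.
have C : (1%:M - i *m q) *m mact E x = mact E x *m (1%:M - i *m q).
  by rewrite mulmxBl mulmxBr mul1mx mulmx1 -!mulmxA hq !mulmxA hi.
rewrite -mulmxA (_ : S *m mact M x = D + mact E x *m S); last by rewrite /D subrK.
by rewrite mulmxDr DW mulmxA K mul0mx add0r mulmxA C -mulmxA.
Qed.

End Q.
Section Q2.
Variables (F : closedFieldType) (V Arr : finType) (s t : Arr -> V).
Local Notation amod := (amod F V Arr).
Local Notation mulB := (@Defs.mulB V Arr s t).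
Local Notation mulA := (@Defs.mulA V Arr s t).
Local Notation is_loop := (@Defs.is_loop V Arr s t).
Local Notation pb := (pbasis V Arr).
Local Notation PTT i := (PT V Arr s t i).
Local Notation ITT i := (IT V Arr s t i).
Local Notation P i := (Ptil F s t i).
Local Notation I i := (Itil F s t i).
Local Notation bv := (@bv F _).
Local Notation br := (@br F _).
Lemma Pbv i x (c : PTT i) : mact (P i) x *m bv c =
  \sum_(r : PTT i) ((mulB x (val c) == Some (val r)) : nat)%:R *: bv r.
Proof. exact: fmx_mulbv. Qed.
Lemma Pbr i x (c : PTT i) : br c *m mact (P i) x =
  \sum_(r : PTT i) ((mulB x (val r) == Some (val c)) : nat)%:R *: br r.
Proof. exact: fmx_brmul. Qed.
Lemma Ibv i x (c : ITT i) : mact (I i) x *m bv c =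
  \sum_(r : ITT i) ((mulB (val r) x == Some (val c)) : nat)%:R *: bv r.
Proof. exact: fmx_mulbv. Qed.
Lemma Ibr i x (c : ITT i) : br c *m mact (I i) x =
  \sum_(r : ITT i) ((mulB (val c) x == Some (val r)) : nat)%:R *: br r.
Proof. exact: fmx_brmul. Qed.

Definition eP i : PTT i := exist _ (inl i) (PTe s t i).
Definition eI i : ITT i := exist _ (inl i) (ITe s t i).

Lemma Pact_some i x (c : PTT i) z (Hz : PTp s t i z) :
  mulB x (val c) = Some z -> mact (P i) x *m bv c = bv (exist _ z Hz : PTT i).
Proof. by move=> H; rewrite Pbv H; apply: sum_ind_some. Qed.
Lemma Pact_none i x (c : PTT i) :
  mulB x (val c) = None -> mact (P i) x *m bv c = 0.
Proof. by move=> H; rewrite Pbv H; apply: sum_ind_none. Qed.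
Lemma Iact_some i x (c : ITT i) z (Hz : ITp s t i z) :
  mulB (val c) x = Some z -> br c *m mact (I i) x = br (exist _ z Hz : ITT i).
Proof. by move=> H; rewrite Ibr H; apply: sum_ind_some. Qed.
Lemma Iact_none i x (c : ITT i) :
  mulB (val c) x = None -> br c *m mact (I i) x = 0.
Proof. by move=> H; rewrite Ibr H; apply: sum_ind_none. Qed.

Lemma eq_bvP i m (A B : 'M[F]_(m, mdim (P i))) :
  (forall c : PTT i, A *m bv c = B *m bv c) -> A = B.
Proof. exact: eq_by_bv. Qed.
Lemma eq_brP i m (A B : 'M[F]_(mdim (P i), m)) :
  (forall c : PTT i, br c *m A = br c *m B) -> A = B.
Proof. exact: eq_by_br. Qed.
Lemma eq_bvI i m (A B : 'M[F]_(m, mdim (I i))) :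
  (forall c : ITT i, A *m bv c = B *m bv c) -> A = B.
Proof. exact: eq_by_bv. Qed.
Lemma eq_brI i m (A B : 'M[F]_(mdim (I i), m)) :
  (forall c : ITT i, br c *m A = br c *m B) -> A = B.
Proof. exact: eq_by_br. Qed.

Lemma Ploop i l : s l = t l -> mact (P i) (inr l) = 0.
Proof.
move=> H; apply: eq_bvP => c; rewrite mul0mx; apply: Pact_none.
by apply: loop_mulB; rewrite /= H eqxx.
Qed.
Lemma Iloop i l : s l = t l -> mact (I i) (inr l) = 0.
Proof.
move=> H; apply: eq_brI => c; rewrite mulmx0; apply: Iact_none.
by apply: loop_mulB'; rewrite /= H eqxx.
Qed.

Lemma smx0 n : (0 : F)%:M = 0 :> 'M[F]_n.
Proof. by apply/matrixP => a b; rewrite !mxE mul0rn. Qed.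

Lemma Sloop j l : mact (@Simple F V Arr j) (inr l) = 0.
Proof. by rewrite /= smx0. Qed.
Lemma Se i j : i != j -> mact (@Simple F V Arr j) (inl i) = 0.
Proof. by move=> H; rewrite /= (inj_eq (@inl_inj _ _)) (negbTE H) smx0. Qed.

Lemma Pe i : mact (P i) (inl i) = bv (eP i) *m br (eP i).
Proof.
apply: eq_bvP => c; rewrite -mulmxA br_bv mul_mx_scalar.
case: (eqVneq (eP i) c) => [<-|Hc].
  by rewrite scale1r (Pact_some (PTe s t i)) //= /Defs.mulB /= eqxx.
rewrite scale0r Pact_none //; apply: PT_ne_e; first exact: (valP c).
apply/negP => /eqP E; move/eqP: Hc; apply; apply: val_inj; by rewrite /= E.
Qed.

Lemma Ie j : mact (I j) (inl j) = bv (eI j) *m br (eI j).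
Proof.
apply: eq_brI => r; rewrite mulmxA br_bv mul_scalar_mx.
case: (eqVneq r (eI j)) => [->|Hc].
  by rewrite scale1r (Iact_some (ITe s t j)) //= /Defs.mulB /= eqxx.
rewrite scale0r Iact_none //; apply: (IT_ne_e (valP r) (ITe s t j)).
apply/negP => /eqP E; move/eqP: Hc; apply; apply: val_inj; by rewrite /= E.
Qed.

Lemma Ic j (c : ITT j) : mact (I j) (val c) = bv (eI j) *m br c.
Proof.
apply: eq_brI => r; rewrite mulmxA br_bv mul_scalar_mx.
case: (eqVneq r (eI j)) => [->|Hc].
  rewrite scale1r (Iact_some (valP c)) //=.
    by congr (br _); apply: val_inj.
  by move: (valP c) => /andP[_ /eqP].
rewrite scale0r Iact_none //; apply: (IT_ne_e (valP r) (valP c)).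
apply/negP => /eqP E; move/eqP: Hc; apply; apply: val_inj; by rewrite /= E.
Qed.

Lemma sec_P i (E : amod) (p : 'M[F]_(mdim (P i), mdim E)) :
  is_amod s t E -> is_hom E (P i) p ->
  (forall u : 'cV[F]_(mdim (P i)), exists v, p *m v = u) ->
  (forall l, s l = i -> t l = i -> mact E (inr l) = 0) ->
  exists r : 'M[F]_(mdim E, mdim (P i)), is_hom (P i) E r /\ p *m r = 1%:M.
Proof.
move=> [HE _] hp surj Hl.
have [v pv] := surj (bv (eP i)).
set v0 := mact E (inl i) *m v.
have pv0 : p *m v0 = bv (eP i).
  by rewrite /v0 mulmxA hp -mulmxA pv Pe -mulmxA br_bv eqxx mul_mx_scalar scale1r.
pose r := \matrix_(k < mdim E, c < #|{: PTT i}|) (mact E (val (enum_val c)) *m v0) k 0.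
have rc : forall c : PTT i, r *m bv c = mact E (val c) *m v0.
  move=> c; rewrite /bv -colE; apply/matrixP => k l.
  by rewrite (ord1 l) !mxE enum_rankK.
exists r; split.
  move=> x; apply: eq_bvP => c; rewrite -!mulmxA rc [RHS]mulmxA HE.
  case: (PT_case x (valP c)) => [[z [Bz Az Pz]] | [Bz [Az | [l [Ex Az sl tl]]]]].
  - by rewrite (Pact_some Pz Bz) rc Az.
  - by rewrite (Pact_none Bz) mulmx0 Az /= mul0mx.
  - by subst x; rewrite (Pact_none Bz) mulmx0 Az /= Hl // mul0mx.
apply: eq_bvP => c; rewrite -mulmxA rc mulmxA hp -mulmxA pv0 mul1mx.
rewrite (Pact_some (valP c)); first by congr (bv _); apply: val_inj.
by move: (valP c) => /andP[_ /eqP].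
Qed.

Lemma retr_I j (E : amod) (ii : 'M[F]_(mdim E, mdim (I j))) :
  is_amod s t E -> is_hom (I j) E ii ->
  (forall w : 'cV[F]_(mdim (I j)), ii *m w = 0 -> w = 0) ->
  (forall l, s l = j -> t l = j -> mact E (inr l) = 0) ->
  exists q : 'M[F]_(mdim (I j), mdim E), is_hom E (I j) q /\ q *m ii = 1%:M.
Proof.
move=> [HE _] hi inj Hl.
have [u uE] : {u | u = ii *m bv (eI j)} by exists (ii *m bv (eI j)).
have u0 : u != 0.
  apply/negP => /eqP H; have := bv_neq0 F (eI j).
  by rewrite (inj _ (etrans (esym uE) H)) eqxx.
have [k Hk] : exists k, u k 0 != 0.
  case: (pickP (fun k => u k 0 != 0)) => [k Hk|H]; first by exists k.
  exfalso; move/negP: u0; apply; apply/eqP/matrixP => a b.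
  rewrite (ord1 b); move: (H a) => /= /negbFE/eqP ->; by rewrite mxE.
pose phi := (u k 0)^-1 *: (delta_mx 0 k : 'rV[F]_(mdim E)).
have phiu : phi *m u = 1%:M.
  apply/matrixP => a b; rewrite (ord1 a) (ord1 b) /phi -scalemxAl -rowE !mxE.
  by rewrite mulVf // eqxx.
pose q := \matrix_(c < #|{: ITT j}|, m < mdim E) (phi *m mact E (val (enum_val c))) 0 m.
have qc : forall c : ITT j, br c *m q = phi *m mact E (val c).
  move=> c; rewrite /br -rowE; apply/matrixP => a b.
  by rewrite (ord1 a) !mxE enum_rankK.
exists q; split.
  move=> x; apply: eq_brI => c; rewrite !mulmxA qc -(mulmxA phi) HE.
  case: (IT_case x (valP c)) => [[z [Bz Az Iz]] | [Bz [Az | [l [Ex Az sl tl]]]]].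
  - by rewrite (Iact_some Iz Bz) qc Az.
  - by rewrite (Iact_none Bz) mul0mx Az /= mulmx0.
  - by subst x; rewrite (Iact_none Bz) mul0mx Az /= Hl // mulmx0.
apply: eq_brI => c; rewrite mulmxA qc -mulmxA -hi Ic !mulmxA -(mulmxA phi) -uE.
by rewrite phiu mul1mx mulmx1.
Qed.

Lemma P_L i x : br (eP i) *m mact (P i) x = ((x == inl i) : nat)%:R *: br (eP i).
Proof.
rewrite Pbr; case: (eqVneq x (inl i)) => [->|nx].
  rewrite scale1r; apply: sum_bool_one => r.
  by rewrite /= (P_row_e _ (valP r)) eqxx /= -val_eqE.
rewrite scale0r; apply: sum_bool_zero => r.
by rewrite /= (P_row_e _ (valP r)) (negbTE nx).
Qed.

Lemma I_R j x : mact (I j) x *m bv (eI j) = ((x == inl j) : nat)%:R *: bv (eI j).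
Proof.
rewrite Ibv; case: (eqVneq x (inl j)) => [->|nx].
  rewrite scale1r; apply: sum_bool_one => r.
  by rewrite /= (I_col_e _ (valP r)) eqxx /= -val_eqE.
rewrite scale0r; apply: sum_bool_zero => r.
by rewrite /= (I_col_e _ (valP r)) (negbTE nx).
Qed.

Lemma P_homz i j : i != j -> hom_zero (P i) (P j) -> mact (P j) (inl i) = 0.
Proof.
move=> ij hz; apply: eq_bvP => c; rewrite mul0mx.
case E: (mulB (inl i) (val c)) => [z|]; last exact: Pact_none.
have [a [ca za sa ta nl]] := P_homz_case ij (valP c) E.
exfalso.
pose f := bv c *m br (eP i).
have hf : is_hom (P i) (P j) f.
  move=> x; rewrite /f -mulmxA P_L -scalemxAr mulmxA.
  have -> : mact (P j) x *m bv c = ((x == inl i) : nat)%:R *: bv c.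
    case: (eqVneq x (inl i)) => [Ex|nx].
      have Hz : PTp s t j z by rewrite za -ca; exact: (valP c).
      subst x; rewrite scale1r (Pact_some Hz E); congr (bv _); apply: val_inj.
      by rewrite /= za ca.
    rewrite scale0r Pact_none //.
    by rewrite ca (P_arr x ta nl) (negbTE nx).
  by rewrite -scalemxAl.
have := hz f hf; move/matrixP/(_ (enum_rank c) (enum_rank (eP i))).
rewrite /f /bv /br mul_delta_mx !mxE !eqxx /=.
by move/eqP; rewrite oner_eq0.
Qed.

Lemma I_homz i j : i != j -> hom_zero (I i) (I j) -> mact (I i) (inl j) = 0.
Proof.
move=> ij hz; apply: eq_brI => r; rewrite mulmx0.
case E: (mulB (val r) (inl j)) => [z|]; last exact: Iact_none.
have [a [ra za sa ta nl]] := I_homz_case ij (valP r) E.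
exfalso.
pose f := bv (eI j) *m br r.
have hf : is_hom (I i) (I j) f.
  move=> x; rewrite /f -mulmxA.
  have -> : br r *m mact (I i) x = ((x == inl j) : nat)%:R *: br r.
    case: (eqVneq x (inl j)) => [Ex|nx].
      have Hz : ITp s t i z by rewrite za -ra; exact: (valP r).
      subst x; rewrite scale1r (Iact_some Hz E); congr (br _); apply: val_inj.
      by rewrite /= za ra.
    rewrite scale0r Iact_none //.
    by rewrite ra (I_arr x sa nl) (negbTE nx).
  by rewrite -scalemxAr mulmxA I_R -scalemxAl.
have := hz f hf; move/matrixP/(_ (enum_rank (eI j)) (enum_rank r)).
rewrite /f /bv /br mul_delta_mx !mxE !eqxx /=.
by move/eqP; rewrite oner_eq0.
Qed.

Lemma P_noarr_iso i : (forall a, s a <> t a -> s a <> i) -> iso (P i) (@Simple F V Arr i).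
Proof.
move=> H.
have allc : forall c : PTT i, c = eP i by move=> c; apply: val_inj; exact: (P_noarr H (valP c)).
exists (br (eP i)), (bv (eP i)); split.
- by move=> x; rewrite P_L /= mul_scalar_mx.
- move=> x; rewrite /= mul_mx_scalar.
  case: (eqVneq x (inl i)) => [->|nx].
    by rewrite scale1r (Pact_some (PTe s t i)) //= /Defs.mulB /= eqxx.
  rewrite scale0r Pbv; apply/esym; apply: sum_bool_zero => r.
  by rewrite (allc r) /= mulB_e_e (negbTE nx).
- by rewrite br_bv eqxx /= mulr1n.
- apply: eq_bvP => c; rewrite -mulmxA br_bv mul1mx (allc c) eqxx /= mulr1n mulmx1.
  by [].
Qed.

Lemma I_noarr_iso i : (forall a, s a <> t a -> t a <> i) -> iso (I i) (@Simple F V Arr i).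
Proof.
move=> H.
have allc : forall c : ITT i, c = eI i by move=> c; apply: val_inj; exact: (I_noarr H (valP c)).
exists (br (eI i)), (bv (eI i)); split.
- move=> x; rewrite /= mul_scalar_mx.
  case: (eqVneq x (inl i)) => [->|nx].
    by rewrite scale1r (Iact_some (ITe s t i)) //= /Defs.mulB /= eqxx.
  rewrite scale0r Ibr; apply: sum_bool_zero => r.
  by rewrite (allc r) /= mulB_e_e' (negbTE nx).
- by move=> x; rewrite I_R /= mul_mx_scalar.
- by rewrite br_bv eqxx /= mulr1n.
- apply: eq_bvI => c; rewrite -mulmxA br_bv mul1mx (allc c) eqxx /= mulr1n mulmx1.
  by [].
Qed.

Lemma kill_P (M N E : amod) (ii : 'M[F]_(mdim E, mdim N)) (p : 'M[F]_(mdim M, mdim E)) i :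
  is_amod s t E -> is_hom N E ii -> is_hom E M p ->
  (forall v : 'cV[F]_(mdim E), p *m v = 0 -> exists w, v = ii *m w) ->
  (forall l, s l = t l -> mact M (inr l) = 0) -> mact N (inl i) = 0 ->
  forall l, s l = i -> t l = i -> mact E (inr l) = 0.
Proof.
move=> [HE _] hi hp ex ML Ne l sl tl; apply: mx0_by_v => v.
have [w Hw] : exists w, mact E (inr l) *m v = ii *m w.
  by apply: ex; rewrite mulmxA hp ML ?mul0mx // sl tl.
have El : mact E (inl i) *m mact E (inr l) = mact E (inr l) by rewrite HE mulA_e_l.
by rewrite -El -mulmxA Hw mulmxA -hi Ne mulmx0 mul0mx.
Qed.

Lemma kill_I (M N E : amod) (ii : 'M[F]_(mdim E, mdim N)) (p : 'M[F]_(mdim M, mdim E)) j :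
  is_amod s t E -> is_hom N E ii -> is_hom E M p ->
  (forall v : 'cV[F]_(mdim E), p *m v = 0 -> exists w, v = ii *m w) ->
  mact M (inl j) = 0 -> (forall l, s l = t l -> mact N (inr l) = 0) ->
  forall l, s l = j -> t l = j -> mact E (inr l) = 0.
Proof.
move=> [HE _] hi hp ex Me NL l sl tl; apply: mx0_by_v => v.
have [w Hw] : exists w, mact E (inl j) *m v = ii *m w.
  by apply: ex; rewrite mulmxA hp Me !mul0mx.
have El : mact E (inr l) *m mact E (inl j) = mact E (inr l) by rewrite HE mulA_l_e.
by rewrite -El -mulmxA Hw mulmxA -hi NL ?mulmx0 ?mul0mx // sl tl.
Qed.

Lemma kill_P1b (E : amod) i (ii : 'M[F]_(mdim E, mdim (P i))) (p : 'M[F]_(mdim (P i), mdim E)) a :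
  is_amod s t E -> is_hom (P i) E ii -> is_hom E (P i) p ->
  (forall w : 'cV[F]_(mdim (P i)), ii *m w = 0 -> w = 0) ->
  (forall v : 'cV[F]_(mdim E), p *m v = 0 -> exists w, v = ii *m w) ->
  s a = i -> s a != t a ->
  forall l, s l = i -> t l = i -> mact E (inr l) = 0.
Proof.
move=> [HE _] hi hp inj ex sa nl l sl tl; apply: mx0_by_v => v.
have [w Hw] : exists w, mact E (inr l) *m v = ii *m w.
  by apply: ex; rewrite mulmxA hp Ploop ?mul0mx // sl tl.
have El : mact E (inl i) *m mact E (inr l) = mact E (inr l) by rewrite HE mulA_e_l.
have Ev : mact E (inr l) *m v = ii *m bv (eP i) *m (br (eP i) *m w).
  by rewrite -El -mulmxA Hw mulmxA -hi Pe !mulmxA.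
pose aP : PTT i := exist _ (inr a) (P_arr_mem sa nl).
have k0 : br (eP i) *m w = 0.
  apply: (@bv_mul_eq0 F _ aP); apply: inj.
  have : mact E (inr a) *m (mact E (inr l) *m v) = 0 by rewrite mulmxA HE /= mul0mx.
  rewrite Ev !mulmxA -hi -(mulmxA ii) (@Pact_some i (inr a) (eP i) (inr a) (P_arr_mem sa nl) (P_arr_act sa nl)).
  by rewrite -mulmxA.
by rewrite Ev k0 mulmx0.
Qed.

Lemma kill_I2b (E : amod) j (ii : 'M[F]_(mdim E, mdim (I j))) (p : 'M[F]_(mdim (I j), mdim E)) a :
  is_amod s t E -> is_hom (I j) E ii -> is_hom E (I j) p ->
  (forall u : 'cV[F]_(mdim (I j)), exists v, p *m v = u) ->
  (forall v : 'cV[F]_(mdim E), p *m v = 0 -> exists w, v = ii *m w) ->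
  t a = j -> s a != t a ->
  forall l, s l = j -> t l = j -> mact E (inr l) = 0.
Proof.
move=> [HE _] hi hp surj ex ta nl l sl tl; apply: mx0_by_v => v.
have El : mact E (inr l) *m mact E (inl j) = mact E (inr l) by rewrite HE mulA_l_e.
pose aI : ITT j := exist _ (inr a) (I_arr_mem ta nl).
have [y py] := surj (bv aI).
have px0 : p *m (mact E (inr a) *m y) = bv (eI j).
  rewrite mulmxA hp -mulmxA py Ibv; apply: sum_bool_one => r.
  by rewrite /= (I_arr_col ta nl (valP r)) -val_eqE.
set k := br (eI j) *m (p *m v).
have [w Hw] : exists w, mact E (inl j) *m v - mact E (inr a) *m y *m k = ii *m w.
  apply: ex; rewrite mulmxBr (mulmxA p (mact E (inr a) *m y)) px0.
  by rewrite mulmxA hp Ie -mulmxA -mulmxA subrr.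
have -> : mact E (inr l) *m v = mact E (inr l) *m (mact E (inl j) *m v) by rewrite mulmxA El.
have -> : mact E (inl j) *m v = ii *m w + mact E (inr a) *m y *m k by rewrite -Hw subrK.
rewrite mulmxDr mulmxA -hi Iloop ?mulmx0 ?mul0mx ?add0r; last by rewrite sl tl.
by rewrite !mulmxA HE /= !mul0mx.
Qed.


Local Notation S i := (@Simple F V Arr i).

Lemma part1a i j : i != j ->
  brick_set (fun b : bool => if b then P i else P j) -> Ext1_zero s t (P i) (P j).
Proof.
move=> ij [_ hz] E HE ii p hi hp inj surj pi ex.
have hzij : hom_zero (P i) (P j) by exact: (hz true false isT).
apply: (sec_P HE hp surj).
apply: (kill_P HE hi hp ex _ (P_homz ij hzij)) => l H; exact: Ploop.
Qed.

Lemma part1b i : ~ iso (P i) (S i) -> Ext1_zero s t (P i) (P i).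
Proof.
move=> Hn E HE ii p hi hp inj surj pi ex.
have [a [sa nl]] : exists a, s a = i /\ s a != t a.
  case: (pickP (fun a => (s a == i) && (s a != t a))) => [a /andP[/eqP ? ?]|H].
    by exists a.
  exfalso; apply: Hn; apply: P_noarr_iso => a st si.
  move: (H a); rewrite /= si eqxx /= => /negbFE/eqP Ea; apply: st; by rewrite si Ea.
apply: (sec_P HE hp surj).
exact: (kill_P1b HE hi hp inj ex sa nl).
Qed.

Lemma part2a i j : i != j ->
  brick_set (fun b : bool => if b then I i else I j) -> Ext1_zero s t (I i) (I j).
Proof.
move=> ij [_ hz] E HE ii p hi hp inj surj pi ex.
have hzij : hom_zero (I i) (I j) by exact: (hz true false isT).
have [q [hq qi]] : exists q, is_hom E (I j) q /\ q *m ii = 1%:M.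
  apply: (retr_I HE hi inj).
  apply: (kill_I HE hi hp ex (I_homz ij hzij)) => l H; exact: Iloop.
exact: (sec_of_retr hi hp hq qi surj pi ex).
Qed.

Lemma part2b i : ~ iso (I i) (S i) -> Ext1_zero s t (I i) (I i).
Proof.
move=> Hn E HE ii p hi hp inj surj pi ex.
have [a [ta nl]] : exists a, t a = i /\ s a != t a.
  case: (pickP (fun a => (t a == i) && (s a != t a))) => [a /andP[/eqP ? ?]|H].
    by exists a.
  exfalso; apply: Hn; apply: I_noarr_iso => a st ti.
  move: (H a); rewrite /= ti eqxx /= => /negbFE/eqP Ea; apply: st; by rewrite ti Ea.
have [q [hq qi]] : exists q, is_hom E (I i) q /\ q *m ii = 1%:M.
  apply: (retr_I HE hi inj).
  exact: (kill_I2b HE hi hp surj ex ta nl).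
exact: (sec_of_retr hi hp hq qi surj pi ex).
Qed.

Lemma part3 i j : i != j -> Ext1_zero s t (P i) (S j).
Proof.
move=> ij E HE ii p hi hp inj surj pi ex.
apply: (sec_P HE hp surj).
apply: (kill_P HE hi hp ex _ (Se ij)) => l H; exact: Ploop.
Qed.

Lemma part4 i j : i != j -> Ext1_zero s t (S i) (I j).
Proof.
move=> ij E HE ii p hi hp inj surj pi ex.
have [q [hq qi]] : exists q, is_hom E (I j) q /\ q *m ii = 1%:M.
  apply: (retr_I HE hi inj).
  apply: (kill_I HE hi hp ex (Se (j:=i) (i:=j) _)) => [|l H]; last exact: Iloop.
  by rewrite eq_sym.
exact: (sec_of_retr hi hp hq qi surj pi ex).
Qed.

End Q2.

Unset Implicit Arguments.
Theorem lemma2p2 (F : closedFieldType) (V Arr : finType) (s t : Arr -> V) :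
  [/\ (forall i j : V, i != j ->
         brick_set (fun b : bool => if b then Ptil F s t i else Ptil F s t j) ->
         Ext1_zero s t (Ptil F s t i) (Ptil F s t j))
    /\ (forall i : V, ~ iso (Ptil F s t i) (Simple F i) ->
         Ext1_zero s t (Ptil F s t i) (Ptil F s t i)),
      (forall i j : V, i != j ->
         brick_set (fun b : bool => if b then Itil F s t i else Itil F s t j) ->
         Ext1_zero s t (Itil F s t i) (Itil F s t j))
    /\ (forall i : V, ~ iso (Itil F s t i) (Simple F i) ->
         Ext1_zero s t (Itil F s t i) (Itil F s t i)),
      (forall i j : V, i != j -> Ext1_zero s t (Ptil F s t i) (Simple F j))
    & (forall i j : V, i != j -> Ext1_zero s t (Simple F i) (Itil F s t j))].
Proof.
split; [split|split| |].
- exact: part1a.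
- exact: part1b.
- exact: part2a.
- exact: part2b.
- exact: part3.
- exact: part4.
Qed.
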